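(* Let $H$ be a balanced graph and let $d \in \mathbb{N}$. If $F \subsetneq H_d$ is a proper subgraph of $H_d$ whose vertex set contains both endpoints of the root of $H_d$, then $e(F) \leqslant \big(v(F) - 2\big)\lambda(H)$.
   Context: $H$ is a graph with $v(H) \geqslant 4$; it is balanced if $e(H) \geqslant 2v(H)-2$ and $\frac{e(F)-1}{v(F)-2} \leqslant \lambda(H) := \frac{e(H)-2}{v(H)-2}$ for every proper subgraph $F \subsetneq H$ with $v(F) \geqslant 3$. The graph $H_d$: choose a sequence of edges $(e_1, e_2, \ldots)$ of $H$ such that $e_j$ and $e_{j+1}$ share no endpoint for every $j$. Take copies $H^{(1)}, \ldots, H^{(d)}$ of $H$ and, for each $1 \leqslant j \leqslant d-1$, identify the endpoints of $e_{j+1}$ in $H^{(j)}$ with the endpoints of $e_{j+1}$ in $H^{(j+1)}$. Then remove $e_1$ from $H^{(1)}$ and, for each $1 \leqslant j \leqslant d-1$, remove the shared edge $e_{j+1}$ of $H^{(j)} \cap H^{(j+1)}$. The root of $H_d$ is the pair of endpoints of $e_1$ in $H^{(1)}$. (Any such choice of edge sequence is allowed.) *)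

(* Defs.v *)
From HB Require Import structures.
From mathcomp Require Import all_boot all_order all_algebra.
Set Implicit Arguments. Unset Strict Implicit. Unset Printing Implicit Defensive.
Import Order.TTheory GRing.Theory Num.Theory.
Local Open Scope ring_scope.

Definition simple_graph (T : finType) (VG : {set T}) (EG : {set {set T}}) : Prop :=
  forall e, e \in EG -> #|e| = 2%N /\ e \subset VG.

Definition is_subgraph (T : finType) (VG : {set T}) (EG : {set {set T}})
  (VF : {set T}) (EF : {set {set T}}) : Prop :=
  VF \subset VG /\ EF \subset EG /\ (forall e, e \in EF -> e \subset VF).

Definition lambdaH (V : finType) (E : {set {set V}}) : rat :=
  ((#|E|%:R - 2) / (#|V|%:R - 2)).

Definition balanced (V : finType) (E : {set {set V}}) : Prop :=
  (#|E| >= 2 * #|V| - 2)%N /\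
  forall (VF : {set V}) (EF : {set {set V}}),
    is_subgraph [set: V] E VF EF -> (VF, EF) <> ([set: V], E) ->
    (3 <= #|VF|)%N ->
    (#|EF|%:R - 1) / (#|VF|%:R - 2) <= lambdaH E.

(* Copies are indexed 0..d-1 (copy k is H^(k+1));
   es k is the edge e_(k+1) of the paper (es 0 = e_1 is the root edge).
   Vertices of H_d are represented by pairs (k, x) : 'I_d * V, where the
   endpoint x of e_(k+1) = es k in copy k (k >= 1) is identified with
   (k-1, x); [rep k x] is the canonical representative. *)

Definition ord_pred_of (d : nat) (k : 'I_d) : 'I_d :=
  Ordinal (leq_ltn_trans (leq_pred k) (ltn_ord k)).

Definition rep (V : finType) (d : nat) (es : nat -> {set V}) (k : 'I_d) (x : V)
  : 'I_d * V :=
  if (0 < k)%N && (x \in es (nat_of_ord k)) then (ord_pred_of k, x) else (k, x).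

(* Edge e of copy k is deleted: it is e_1 in copy 0, or it is the shared
   edge e_(k+1) with copy k-1, or the shared edge e_(k+2) with copy k+1. *)
Definition removed (V : finType) (d : nat) (es : nat -> {set V}) (k : 'I_d)
  (e : {set V}) : bool :=
  (e == es (nat_of_ord k)) || ((k.+1 < d)%N && (e == es k.+1)).

Definition Hd_V (V : finType) (d : nat) (es : nat -> {set V}) : {set 'I_d * V} :=
  [set rep es p.1 p.2 | p : 'I_d * V].

Definition Hd_E (V : finType) (E : {set {set V}}) (d : nat) (es : nat -> {set V})
  : {set {set 'I_d * V}} :=
  [set [set rep es p.1 x | x in (p.2 : {set V})] |
     p in [set p : 'I_d * {set V} | (p.2 \in E) && ~~ removed es p.1 p.2]].

(* Main.v *)
Require Import Defs.
From HB Require Import structures.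
From mathcomp Require Import all_boot all_order all_algebra.
From mathcomp Require Import lra zify.
Import Order.TTheory GRing.Theory Num.Theory.
Local Open Scope ring_scope.

Lemma step_ineq (lam : rat) (n m L L1 : nat) (fl a b1 : bool) :
  2 <= lam -> (L <= 2)%N -> (L <= n)%N -> (b1 -> L1 <= n)%N ->
  ((n <= 1)%N -> m = 0%N) ->
  (fl -> [/\ L = 2%N, (b1 -> L1 = 2%N) & (~~ b1 -> a) /\ (m + 1 + b1)%:R = (n%:R - 2) * lam + 2 :> rat]) ->
  ((2 <= n)%N -> ~~ fl -> (m + (L == 2%N) + (b1 && (L1 == 2%N)))%:R <= (n%:R - 2) * lam + 1 :> rat) ->
  m%:R <= (n%:R - L%:R) * lam + ((L == 2%N) && fl && a)%:R - ((b1 && (L1 == 2%N)) && a)%:R.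
Proof.
move=> hl hL2 hLn hL1n hm0 hfl hnf.
have [hn1|hn2] := leqP n 1.
  rewrite hm0 //.
  have -> : (L == 2%N) = false by apply/negbTE; lia.
  have -> : (b1 && (L1 == 2%N)) = false.
    by case hb: b1 => //=; apply/negbTE; have := hL1n hb; lia.
  rewrite /= subr0 addr0.
  have hnl : L%:R <= n%:R :> rat by rewrite ler_nat.
  nra.
case hfl': fl in hfl hnf *.
  have [-> hb1 [ha heq]] := hfl erefl.
  rewrite eqxx /=.
  case hb: b1 in hb1 ha heq *.
    rewrite hb1 // eqxx /=.
    rewrite !natrD /= in heq. case: (a) => /=; lra.
  rewrite ha //= !natrD /= in heq *. lra.
have := hnf hn2 erefl.
rewrite andbF /= addr0 !natrD.
case: (L == 2%N) / eqP => [->|hL] /=.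
  case: (b1 && (L1 == 2%N)); case: (a) => /=; lra.
have : (L <= 1)%N by lia.
rewrite leq_eqVlt ltnS leqn0 => /orP [] /eqP -> /=;
  case: (b1 && (L1 == 2%N)); case: (a) => /=; lra.
Qed.

Lemma suffix_ineq (d : nat) (lam : rat) (n m L : nat -> nat) (full : nat -> bool) :
 2 <= lam ->
 (forall k, (k < d)%N -> (L k <= 2)%N) ->
 (forall k, (k < d)%N -> (L k <= n k)%N) ->
 (forall k, (k.+1 < d)%N -> (L k.+1 <= n k)%N) ->
 (forall k, (k < d)%N -> (n k <= 1)%N -> m k = 0%N) ->
 (forall k, (k < d)%N -> full k -> [/\ L k = 2%N, ((k.+1 < d)%N -> L k.+1 = 2%N) &
      (m k + 1 + (k.+1 < d)%N)%:R = ((n k)%:R - 2) * lam + 2 :> rat]) ->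
 (forall k, (k < d)%N -> (2 <= n k)%N -> ~~ full k ->
      (m k + (L k == 2%N) + ((k.+1 < d)%N && (L k.+1 == 2%N)))%:R <= ((n k)%:R - 2) * lam + 1 :> rat) ->
 forall i j, (j + i.+1 = d)%N ->
  \sum_(j <= k < d) (m k)%:R <=
   (\sum_(j <= k < d) (n k)%:R - \sum_(j.+1 <= k < d) (L k)%:R - (L j)%:R) * lam
   + ((L j == 2%N) && \big[andb/true]_(j <= k < d) full k)%:R :> rat.
Proof.
move=> hl hL2 hLn hL1n hm0 hfl hnf.
elim=> [|i IH] j hj.
  have hjd : (j < d)%N by lia.
  have hd : d = j.+1 by lia.
  rewrite hd !big_nat1 big_geq // subr0.
  have hb : (j.+1 < j.+1)%N = false by apply: ltnn.
  have hx : (j.+1 < j.+1)%N -> (L j.+1 <= n j)%N by rewrite hb.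
  have := @step_ineq lam (n j) (m j) (L j) (L j.+1) (full j) true (j.+1 < j.+1)%N hl
     (hL2 _ hjd) (hLn _ hjd) hx (hm0 _ hjd).
  rewrite hb /= !andbT subr0; apply.
    move=> /(hfl _ hjd) [h1 h2 h3]; split => //; rewrite hd hb in h3; split => //.
  by move=> h2 h3; have := hnf _ hjd h2 h3; rewrite hd hb.
have hjd : (j < d)%N by lia.
have hj1d : (j.+1 < d)%N by lia.
have IH' := IH j.+1 ltac:(lia).
set a := \big[andb/true]_(j.+1 <= k < d) full k in IH' *.
have e1 : \sum_(j <= k < d) ((m k)%:R : rat) = (m j)%:R + \sum_(j.+1<=k<d) (m k)%:R := big_ltn hjd.
have e2 : \sum_(j <= k < d) ((n k)%:R : rat) = (n j)%:R + \sum_(j.+1<=k<d) (n k)%:R := big_ltn hjd.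
have e3 : \sum_(j.+1 <= k < d) ((L k)%:R : rat) = (L j.+1)%:R + \sum_(j.+2<=k<d) (L k)%:R := big_ltn hj1d.
have e4 : \big[andb/true]_(j <= k < d) full k = full j && a := big_ltn hjd.
rewrite e1 e2 e3 e4.
have := @step_ineq lam (n j) (m j) (L j) (L j.+1) (full j) a true hl
     (hL2 _ hjd) (hLn _ hjd) (fun h => hL1n j hj1d) (hm0 _ hjd).
move=> H.
have {}H : (m j)%:R <= ((n j)%:R - (L j)%:R) * lam + ((L j == 2%N) && full j && a)%:R -
    ((L j.+1 == 2%N) && a)%:R.
  apply: H.
    move=> /(hfl _ hjd) [h1 h2 h3]; split => //; first by move=> _; exact: h2.
    by split => //; rewrite hj1d in h3.
  by move=> h2 h3; have := hnf _ hjd h2 h3; rewrite hj1d.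
rewrite andbA.
set S1 := \sum_(j.+1 <= k < d) (m k)%:R in IH' *.
set S2 := \sum_(j.+1 <= k < d) (n k)%:R in IH' *.
set S3 := \sum_(j.+2 <= k < d) (L k)%:R in IH' *.
move: IH' H; rewrite !mulrBl !mulrDl; lra.
Qed.

Theorem lemma2p5 (V : finType) (E : {set {set V}})
  (Hsimple : simple_graph [set: V] E) (Hv : (4 <= #|V|)%N)
  (Hbal : balanced E)
  (es : nat -> {set V})
  (Hes : forall j, es j \in E)
  (Hdisj : forall j, [disjoint es j & es j.+1])
  (d : nat) (hd : (0 < d)%N)
  (VF : {set 'I_d * V}) (EF : {set {set 'I_d * V}})
  (HF : is_subgraph (Hd_V d es) (Hd_E E d es) VF EF)
  (Hproper : (VF, EF) <> (Hd_V d es, Hd_E E d es))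
  (Hroot : forall x, x \in es 0%N -> (Ordinal hd, x) \in VF) :
  #|EF|%:R <= (#|VF|%:R - 2) * lambdaH E.
Proof.
have hE2 : forall e, e \in E -> #|e| = 2%N by move=> e /Hsimple [].
have hes2 : forall j, #|es j| = 2%N by move=> j; exact: hE2.
have hdj : forall k x, x \in es k.+1 -> x \notin es k.
  by move=> k x hx; rewrite (disjointFl (Hdisj k) hx).
pose o (k : nat) : 'I_d := insubd (Ordinal hd) k.
have ho : forall k, (k < d)%N -> nat_of_ord (o k) = k.
  by move=> k hk; rewrite /o val_insubd hk.
have hoi : forall i : 'I_d, o i = i by move=> i; exact: valKd.
have hrem : forall k e, (k < d)%N -> removed es (o k) e = (e == es k) || ((k.+1 < d)%N && (e == es k.+1)).
  by move=> k e hk; rewrite /removed ho.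
have hrep0 : forall k x, (k < d)%N -> ((k == 0%N) || (x \notin es k)) -> rep es (o k) x = (o k, x).
  move=> k x hk h; rewrite /rep ho //.
  by case: k hk h => [|k] //= hk h; rewrite (negbTE h).
have hrepS : forall k x, (k.+1 < d)%N -> x \in es k.+1 -> rep es (o k.+1) x = (o k, x).
  move=> k x hk hx; rewrite /rep ho //= hx /=; congr pair; apply: val_inj => /=.
  by rewrite !ho //; lia.
pose W k := [set x | rep es (o k) x \in VF].
pose img k (e : {set V}) := [set rep es (o k) x | x in e].
pose M k := [set e in E | ~~ removed es (o k) e && (img k e \in EF)].
pose full k := (W k == setT) && (M k == [set e in E | ~~ removed es (o k) e]).
pose n k := #|W k|.
pose m k := #|M k|.
pose L k := #|es k :&: W k|.
pose lam := lambdaH E.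
have hMsub : forall k e, e \in M k -> e \subset W k.
  move=> k e; rewrite inE => /andP [_ /andP [_ he]].
  apply/subsetP => x hx; rewrite inE.
  case: HF => _ [_ H3]; apply: (subsetP (H3 _ he)).
  by apply: imset_f.
have hWS : forall k, (k.+1 < d)%N -> es k.+1 :&: W k.+1 = es k.+1 :&: W k.
  move=> k hk; apply/setP => x; rewrite !inE.
  case hx: (x \in es k.+1) => //=.
  rewrite hrepS // hrep0 //; first lia.
  by rewrite hdj ?orbT.
have hLe : forall k A, (#|es k :&: A| == 2%N) = (es k \subset A).
  move=> k A; rewrite -(hes2 k); apply/eqP/idP.
    by move=> h; apply/setIidPl/eqP; rewrite eqEcard subsetIl /= h.
  by move/setIidPl => ->.
have hv2 : (#|V|%:R - 2 : rat) > 0.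
  have h : (4%:R : rat) <= #|V|%:R by rewrite ler_nat.
  lra.
have hlam : 2 <= lam.
  rewrite /lam /lambdaH ler_pdivlMr //.
  have [h1 _] := Hbal.
  have h : ((2 * #|V|)%:R : rat) <= (#|E| + 2)%:R by rewrite ler_nat; lia.
  rewrite natrM natrD in h; lra.
have hEv : (#|E|%:R : rat) = (#|V|%:R - 2) * lam + 2.
  by rewrite /lam /lambdaH mulrC divfK ?subrK // gt_eqF.
have h_L2 : forall k, (k < d)%N -> (L k <= 2)%N.
  by move=> k _; rewrite /L -(hes2 k); apply: subset_leq_card; apply: subsetIl.
have h_Ln : forall k, (k < d)%N -> (L k <= n k)%N.
  by move=> k _; rewrite /L /n; apply: subset_leq_card; apply: subsetIr.
have h_L1n : forall k, (k.+1 < d)%N -> (L k.+1 <= n k)%N.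
  by move=> k hk; rewrite /L /n hWS //; apply: subset_leq_card; apply: subsetIr.
have hME : forall k e, e \in M k -> e \in E.
  by move=> k e; rewrite inE => /andP [].
have h_m0 : forall k, (k < d)%N -> (n k <= 1)%N -> m k = 0%N.
  move=> k _ hn; apply/eqP; rewrite cards_eq0; apply/eqP/setP => e.
  rewrite in_set0; apply/negP => he.
  have := subset_leq_card (hMsub _ _ he); rewrite hE2 ?(hME _ _ he) -/(n k); lia.
have hneq : forall k, es k != es k.+1.
  move=> k; apply/eqP => h.
  have /card_gt0P [x hx] : (0 < #|es k.+1|)%N by rewrite hes2.
  by have := hdj k x hx; rewrite h hx.
pose B k := [set e | removed es (o k) e].
have h_fl : forall k, (k < d)%N -> full k -> [/\ L k = 2%N, ((k.+1 < d)%N -> L k.+1 = 2%N) &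
      (m k + 1 + (k.+1 < d)%N)%:R = ((n k)%:R - 2) * lam + 2 :> rat].
  move=> k hk /andP [/eqP hW /eqP hM].
  split.
  - by apply/eqP; rewrite /L hLe hW subsetT.
  - by move=> hk1; rewrite /L hWS // hW setIT hes2.
  have hMk : M k = E :\: B k.
    by rewrite hM; apply/setP => e; rewrite !inE andbC.
  have hEB : (#|E :&: B k| = 1 + (k.+1 < d))%N.
    case hk1 : (k.+1 < d)%N.
      have -> : E :&: B k = [set es k; es k.+1].
        apply/setP => e; rewrite !inE hrem // hk1 /=.
        by case: eqP => [->|_]; case: eqP => [->|_]; rewrite ?Hes ?andbF ?andbT.
      by rewrite cards2 hneq.
    have -> : E :&: B k = [set es k].
      apply/setP => e; rewrite !inE hrem // hk1 /= orbF.
      by case: eqP => [->|_]; rewrite ?Hes ?andbF.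
    by rewrite cards1.
  have := cardsID (B k) E.
  rewrite -hMk hEB -/(m k) => hc.
  have -> : (m k + 1 + (k.+1 < d))%N = #|E|.
    by move: hc; case: (k.+1 < d)%N => <-; rewrite /nat_of_bool; lia.
  by rewrite hEv /n hW cardsT.
have h_nf : forall k, (k < d)%N -> (2 <= n k)%N -> ~~ full k ->
      (m k + (L k == 2%N) + ((k.+1 < d)%N && (L k.+1 == 2%N)))%:R <= ((n k)%:R - 2) * lam + 1 :> rat.
  move=> k hk hn hnf.
  pose Rin := [set e in E | removed es (o k) e & e \subset W k].
  pose Y := M k :|: Rin.
  have hesR : forall j, removed es (o k) (es j) -> es j \subset W k -> es j \in Rin.
    by move=> j h1 h2; rewrite !inE Hes h1 h2.
  have h1 : ((L k == 2%N) + ((k.+1 < d)%N && (L k.+1 == 2%N)) <= #|Rin|)%N.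
    have -> : (k.+1 < d)%N && (L k.+1 == 2%N) = (k.+1 < d)%N && (es k.+1 \subset W k).
      by case hk1: (k.+1 < d)%N => //=; rewrite /L hWS // hLe.
    rewrite /L hLe.
    have hr0 : removed es (o k) (es k) by rewrite hrem // eqxx.
    have hr1 : (k.+1 < d)%N -> removed es (o k) (es k.+1) by move=> h; rewrite hrem // h eqxx orbT.
    case hs0 : (es k \subset W k); case hs1 : ((k.+1 < d)%N && (es k.+1 \subset W k)) => //=.
    - move/andP: hs1 => [hk1 hs1].
      have : [set es k; es k.+1] \subset Rin.
        by apply/subsetP => e; rewrite in_set2 => /orP [] /eqP ->; apply: hesR => //; apply: hr1.
      by move/subset_leq_card; rewrite cards2 hneq.
    - have : [set es k] \subset Rin by apply/subsetP => e; rewrite in_set1 => /eqP ->; apply: hesR.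
      by move/subset_leq_card; rewrite cards1.
    - move/andP: hs1 => [hk1 hs1].
      have : [set es k.+1] \subset Rin.
        by apply/subsetP => e; rewrite in_set1 => /eqP ->; apply: hesR => //; apply: hr1.
      by move/subset_leq_card; rewrite cards1.
  have h2 : #|Y| = (m k + #|Rin|)%N.
    have := cardsUI (M k) Rin.
    have -> : M k :&: Rin = set0.
      apply/setP => e; rewrite !inE.
      by case: (removed es (o k) e); rewrite ?andbF ?andbT.
    by rewrite cards0 addn0.
  have hYsub : forall e, e \in Y -> e \subset W k /\ e \in E.
    move=> e; rewrite inE => /orP [he|].
      by split; [apply: hMsub he | apply: hME he].
    by rewrite inE => /andP [-> /andP [_ ->]].
  have h3 : (#|Y|%:R : rat) <= ((n k)%:R - 2) * lam + 1.
    have [hn2|hn3] := leqP (n k) 2.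
      have hn2' : n k = 2%N by lia.
      have : Y \subset [set W k].
        apply/subsetP => e he; rewrite inE; have [hs hE] := hYsub e he.
        by rewrite eqEcard hs (hE2 e hE); move: hn2'; rewrite /n => ->.
      move/subset_leq_card; rewrite cards1 => h.
      have : (#|Y|%:R : rat) <= 1%:R by rewrite ler_nat.
      rewrite hn2'; lra.
    have [_ Hb] := Hbal.
    have hsg : is_subgraph [set: V] E (W k) Y.
      split; first exact: subsetT.
      split; last by move=> e /hYsub [].
      by apply/subsetP => e /hYsub [].
    have hne : (W k, Y) <> ([set: V], E).
      case=> hW hY; move/negP: hnf; apply; rewrite /full hW eqxx /=.
      apply/eqP/setP => e; rewrite [RHS]inE; apply/idP/idP.
        by rewrite inE => /andP [-> /andP [-> _]].
      move=> /andP [heE hnr].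
      have : e \in Y by rewrite hY.
      by rewrite inE => /orP [//|]; rewrite inE (negbTE hnr) andbF.
    have := Hb _ _ hsg hne hn3.
    rewrite -/lam ler_pdivrMr; last first.
      have : (3%:R : rat) <= (n k)%:R by rewrite ler_nat.
      rewrite /n; lra.
    rewrite -/(n k); lra.
  apply: le_trans h3; rewrite h2 ler_nat -addnA leq_add2l; exact: h1.
have hVF : (\sum_(i : 'I_d) #|[set x | (i, x) \in VF]| = #|VF|)%N.
  rewrite (eq_bigr (fun i => \sum_(x in [set x | (i, x) \in VF]) 1)%N); last first.
    by move=> i _; rewrite sum1_card.
  rewrite (pair_big_dep xpredT (fun i x => x \in [set x | (i, x) \in VF]) (fun _ _ => 1%N)) /=.
  rewrite -sum1_card; apply: eq_bigl => -[i x] /=; by rewrite inE.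
have hP : forall (P : {set 'I_d * {set V}}), (\sum_(i : 'I_d) #|[set x | (i, x) \in P]| = #|P|)%N.
  move=> P.
  rewrite (eq_bigr (fun i => \sum_(x in [set x | (i, x) \in P]) 1)%N); last first.
    by move=> i _; rewrite sum1_card.
  rewrite (pair_big_dep xpredT (fun i x => x \in [set x | (i, x) \in P]) (fun _ _ => 1%N)) /=.
  rewrite -sum1_card; apply: eq_bigl => -[i x] /=; by rewrite inE.
pose A k := [set x | (o k, x) \in VF].
have hA : (\sum_(0 <= k < d) #|A k| = #|VF|)%N.
  rewrite big_mkord -hVF; apply: eq_bigr => i _; by rewrite /A hoi.
have hvert : (\sum_(0 <= k < d) n k <= #|VF| + \sum_(1 <= k < d) L k)%N.
  rewrite -hA !(big_ltn hd).
  have h0 : (n 0 <= #|A 0|)%N.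
    apply: subset_leq_card; apply/subsetP => x; rewrite !inE hrep0 //.
  have h1 : (\sum_(1 <= k < d) n k <= \sum_(1 <= k < d) (#|A k| + L k))%N.
    rewrite big_seq_cond [X in (_ <= X)%N]big_seq_cond; apply: leq_sum => k /andP [hk _].
    rewrite mem_index_iota in hk.
    apply: leq_trans (_ : #|A k :|: (es k :&: W k)| <= _)%N; last by rewrite cardsU leq_subr.
    apply: subset_leq_card; apply/subsetP => x hx.
    case hxe : (x \in es k); first by rewrite in_setU in_setI hxe hx orbT.
    rewrite in_setU; apply/orP; left; rewrite inE -hrep0.
    - by rewrite inE in hx.
    - lia.
    - by rewrite hxe orbT.
  rewrite big_split /= in h1; by rewrite -addnA; apply: leq_add.
have hedge : (#|EF| <= \sum_(0 <= k < d) m k)%N.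
  pose P := [set p : 'I_d * {set V} | p.2 \in M p.1].
  pose f := fun p : 'I_d * {set V} => img p.1 p.2.
  have hsub : EF \subset f @: P.
    apply/subsetP => e he.
    case: HF => _ [hsub _].
    move: (subsetP hsub e he); rewrite /Hd_E => /imsetP [p hp hpe].
    rewrite inE in hp; move/andP: hp => [hpE hpr].
    apply/imsetP; exists p; last by rewrite /f /img hoi.
    rewrite inE /M inE hpE hoi hpr /= /img hoi -hpe; exact: he.
  apply: leq_trans (subset_leq_card hsub) _.
  apply: leq_trans (leq_imset_card _ _) _.
  rewrite -hP big_mkord; apply: eq_leq; apply: eq_bigr => i _.
  by apply: eq_card => e; rewrite [in LHS]inE /P inE.
have hL0 : L 0%N = 2%N.
  apply/eqP; rewrite /L hLe; apply/subsetP => x hx; rewrite inE hrep0 //.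
  have -> : o 0%N = Ordinal hd by apply: val_inj; rewrite /= ho.
  exact: Hroot.
have hnotall : \big[andb/true]_(0 <= k < d) full k = false.
  apply/negP => hall; apply: Hproper.
  rewrite big_all in hall; move/allP: hall => hall.
  have hfk : forall i : 'I_d, full i by move=> i; apply: (hall (nat_of_ord i)); rewrite mem_index_iota /=.
  case: HF => hV [hE _].
  have -> : VF = Hd_V d es.
    apply/eqP; rewrite eqEsubset hV /=; apply/subsetP => p /imsetP [q _ ->].
    have /andP [/eqP hW _] := hfk q.1.
    have : q.2 \in W q.1 by rewrite hW inE.
    by rewrite inE hoi.
  have -> : EF = Hd_E E d es.
    apply/eqP; rewrite eqEsubset hE /=; apply/subsetP => e /imsetP [p hp ->].
    have /andP [_ /eqP hM] := hfk p.1.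
    rewrite inE in hp.
    have : p.2 \in M p.1 by rewrite hM inE hoi.
    by rewrite inE => /andP [_ /andP [_]]; rewrite /img hoi.
  by [].
have hsuf := @suffix_ineq d lam n m L full hlam h_L2 h_Ln h_L1n h_m0 h_fl h_nf d.-1 0%N ltac:(lia).
rewrite hL0 eqxx hnotall /= addr0 in hsuf.
have hedge' : (#|EF|%:R : rat) <= \sum_(0 <= k < d) (m k)%:R by rewrite -natr_sum ler_nat.
have hvert' : ((\sum_(0 <= k < d) n k)%:R : rat) <= #|VF|%:R + (\sum_(1 <= k < d) L k)%:R.
  by rewrite -natrD ler_nat.
rewrite -!natr_sum in hsuf hedge'.
apply: le_trans hedge' _; apply: le_trans hsuf _.
rewrite -/lam; apply: ler_wpM2r; first lra.
lra.
Qed.
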